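(* Let $K\ge 2$, let $m_1<\cdots<m_K$ be pairwise co-prime positive integers, $M$ a positive integer and $M_k=Mm_k$. Let $N_1,N_2$ be nonnegative integers, $r_{l,k}=\langle N_l\rangle_{M_k}$, $r_l^c=\langle N_l\rangle_M$, and let $\tilde r_{l,k}=r_{l,k}+\Delta r_{l,k}$ ($l=1,2$, $k=1,\ldots,K$) with integer errors $\Delta r_{l,k}$. Let $\tau=\max_{l,k}|\Delta r_{l,k}|$ and $\tilde r^c_{l,k}=\langle\tilde r_{l,k}\rangle_M$. List the $2K$ numbers $\tilde r^c_{l,k}$ ($l=1,2$, $k=1,\ldots,K$, counted with multiplicity) in nondecreasing order as $s_1\le s_2\le\cdots\le s_{2K}$, and define $D_k=s_{k+1}-s_k$ for $k=1,\ldots,2K-1$ and $D_{2K}=s_1-s_{2K}+M$. If $\tau<M/8$, then there exists one and only one index $k_0\in\{1,\ldots,K\}$ with $$D_{k_0}+D_{k_0+K}>M/2.$$ Moreover, define the multisets $\Omega_1=\{s_{k_0+1},\ldots,s_{k_0+K}\}$ and $$\Omega_2=\begin{cases}\{s_1,\ldots,s_K\}, & k_0=K,\\ \{s_{k_0+K+1}-M,\ldots,s_{2K}-M,\ s_1,\ldots,s_{k_0}\}, & k_0\ne K.\end{cases}$$ Then $\max\Omega_1-\min\Omega_1\le 2\tau$ and $\max\Omega_2-\min\Omega_2\le 2\tau$.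
   Context: For a positive integer $n$ and an integer $x$ (possibly negative), $\langle x\rangle_n$ denotes the remainder of $x$ modulo $n$, i.e. the unique element of $\{0,\ldots,n-1\}$ congruent to $x$ modulo $n$. Note $\sum_{k=1}^{2K}D_k=M$ and all $D_k\ge 0$. *)

(* Defs.v *)
From HB Require Import structures.
From mathcomp Require Import all_boot all_order all_algebra.
Set Implicit Arguments. Unset Strict Implicit. Unset Printing Implicit Defensive.
Import Order.TTheory GRing.Theory Num.Theory.
Local Open Scope ring_scope.

Section Defs.
Variables (K M : nat) (m : 'I_K -> nat) (N : 'I_2 -> nat) (Delta : 'I_2 -> 'I_K -> int).

Definition rt (l : 'I_2) (k : 'I_K) : int := ((N l %% (M * m k))%N)%:Z + Delta l k.

(* tilde r^c_{l,k} = <tilde r_{l,k}>_M  (intdiv modulo, nonnegative for M > 0) *)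
Definition rtc (l : 'I_2) (k : 'I_K) : int := (rt l k %% (M%:Z))%Z.

Definition tau : nat := \max_(l : 'I_2) \max_(k : 'I_K) `|Delta l k|%N.

Definition svals : seq int := [seq rtc l k | l <- enum 'I_2, k <- enum 'I_K].
Definition ssorted : seq int := sort (fun x y : int => x <= y) svals.

(* s_i, 1-based, i = 1..2K *)
Definition s (i : nat) : int := nth 0 ssorted i.-1.

Definition D (k : nat) : int :=
  if k == (2 * K)%N then s 1 - s (2 * K) + M%:Z else s k.+1 - s k.

Definition Omega1 (k0 : nat) : seq int := [seq s i | i <- iota k0.+1 K].

Definition Omega2 (k0 : nat) : seq int :=
  if k0 == K then [seq s i | i <- iota 1 K]
  else [seq s i - M%:Z | i <- iota (k0 + K).+1 (K - k0)] ++ [seq s i | i <- iota 1 k0].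
End Defs.

Definition spread_le (O : seq int) (b : int) : Prop :=
  forall x y, x \in O -> y \in O -> x - y <= b.

(* Main.v *)
Require Import Defs.
From HB Require Import structures.
From mathcomp Require Import all_boot all_order all_algebra zify.
Import Order.TTheory GRing.Theory Num.Theory.
Local Open Scope ring_scope.

Lemma count3 (E : seq int) (Q1 Q2 Q3 P : pred int) :
  (forall x, x \in E -> (Q1 x + Q2 x + Q3 x)%N = P x) ->
  (count Q1 E + count Q2 E + count Q3 E)%N = count P E.
Proof.
elim: E => //= x E IH H.
have Hx := H x (mem_head _ _).
have IH' := IH (fun y hy => H y (@mem_behead _ (x :: E) y hy)).
lia.
Qed.

Lemma ex_min (E : seq int) : E != [::] -> exists2 mu, mu \in E & forall x, x \in E -> mu <= x.
Proof.
elim: E => //= x E IH _.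
case: (E =P [::]) => [->|/eqP hE].
  by exists x; rewrite ?mem_head // => y; rewrite inE => /eqP ->.
case: (IH hE) => mu hmu hmin.
case: (lerP x mu) => hxm.
  exists x; first exact: mem_head.
  move=> y; rewrite inE => /orP [/eqP -> //| /hmin]; lia.
exists mu; first by rewrite inE hmu orbT.
move=> y; rewrite inE => /orP [/eqP -> | /hmin //]; lia.
Qed.

Lemma ex_max (E : seq int) : E != [::] -> exists2 mu, mu \in E & forall x, x \in E -> x <= mu.
Proof.
elim: E => //= x E IH _.
case: (E =P [::]) => [->|/eqP hE].
  by exists x; rewrite ?mem_head // => y; rewrite inE => /eqP ->.
case: (IH hE) => mu hmu hmin.
case: (lerP mu x) => hxm.
  exists x; first exact: mem_head.
  move=> y; rewrite inE => /orP [/eqP -> //| /hmin]; lia.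
exists mu; first by rewrite inE hmu orbT.
move=> y; rewrite inE => /orP [/eqP -> | /hmin //]; lia.
Qed.

Lemma count_all_eq (E : seq int) (P : pred int) : (forall x, x \in E -> P x) -> count P E = size E.
Proof. move=> H; rewrite -count_predT; apply: eq_in_count => x /H ->. by []. Qed.

Lemma count_none (E : seq int) (P : pred int) : (forall x, x \in E -> ~~ P x) -> count P E = 0%N.
Proof. move=> H; rewrite -(count_pred0 E); apply: eq_in_count => x /H /negbTE ->. by []. Qed.

Section Key.
Variables (S E1 E2 : seq int) (K M tau : nat) (w : int).
Hypotheses (hK : (0 < K)%N) (hM : (0 < M)%N) (hS : sorted <=%O S)
  (hSr : forall x, x \in S -> 0 <= x < M%:Z)
  (hE1 : size E1 = K) (hE2 : size E2 = K)
  (hperm : perm_eq S (map (fun x => (x %% M%:Z)%Z) (E1 ++ E2)))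
  (hw : 0 <= w <= 2 * M%:Z)
  (hwin : forall x, x \in E1 ++ E2 -> w <= x <= w + M%:Z - 1)
  (hn1 : forall x y, x \in E1 -> y \in E1 -> x - y <= 2 * tau%:Z)
  (hn2 : forall x y, x \in E2 -> y \in E2 -> x - y <= 2 * tau%:Z).

Definition u := S ++ map (fun x => x + M%:Z) S ++ map (fun x => x + 2 * M%:Z) S.

Lemma size_S : size S = (2 * K)%N.
Proof. by rewrite (perm_size hperm) size_map size_cat hE1 hE2; lia. Qed.

Lemma size_u : size u = (6 * K)%N.
Proof. by rewrite /u !size_cat !size_map size_S; lia. Qed.

Lemma sorted_u : sorted <=%O u.
Proof.
rewrite le_sorted_pairwise /u !pairwise_cat !pairwise_map.
rewrite -le_sorted_pairwise hS /=.
have hS' := hS; rewrite le_sorted_pairwise in hS'.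
apply/and4P; split.
- apply/allrelP => x y hx; rewrite mem_cat => /orP [] /mapP [z hz ->];
  have := hSr _ hx; have := hSr _ hz; lia.
- apply/allrelP => x y /mapP [x' hx' ->] /mapP [z hz ->];
  have := hSr _ hx'; have := hSr _ hz; lia.
- by apply: sub_pairwise hS' => x y /=; lia.
- by apply: sub_pairwise hS' => x y /=; lia.
Qed.

Lemma count_u (P : pred int) : (forall y, P y -> w <= y <= w + M%:Z - 1) ->
  count P u = count P (E1 ++ E2).
Proof.
move=> hP.
rewrite /u !count_cat !count_map addnA.
rewrite !(permP hperm) !count_map.
rewrite -count_cat; apply: count3 => x hx /=.
have := hwin _ hx => hxw.
have Hm := divz_eq x M%:Z.
set q := (x %/ M%:Z)%Z in Hm. set r := (x %% M%:Z)%Z in Hm *.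
have hr : 0 <= r < M%:Z by rewrite /r; lia.
have hq : (q == 0) || (q == 1) || (q == 2) by nia.
have nP : forall y, ~~ (w <= y <= w + M%:Z - 1) -> P y = false.
  by move=> y hy; apply/negP => /hP; apply/negP.
case/orP: hq => [/orP [] | ] /eqP hq; rewrite hq in Hm.
- have -> : r = x by lia.
  rewrite (nP (x + M%:Z)) ?(nP (x + 2 * M%:Z)); [by case: (P x)| lia | lia].
- have -> : r + M%:Z = x by lia.
  rewrite (nP r) ?(nP (r + 2 * M%:Z)); [by case: (P x)| lia | lia].
- have -> : r + 2 * M%:Z = x by lia.
  rewrite (nP r) ?(nP (r + M%:Z)); [by case: (P x)| lia | lia].
Qed.

Lemma count_u_split (Q : pred int) :
  (forall y, Q y -> w <= y -> y <= w + M%:Z - 1) ->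
  count Q u = addn (count (fun x => Q x && (x < w)) u) (count (fun x => Q x && (w <= x)) (E1 ++ E2)).
Proof.
move=> hQ.
rewrite -(count_u (fun x => Q x && (w <= x))); last first.
  by move=> y /andP [h1 h2]; rewrite h2 (hQ y h1 h2).
rewrite -count_predUI.
have -> : count (predI (fun x => Q x && (x < w)) (fun x => Q x && (w <= x))) u = 0%N.
  by apply: count_none => x _ /=; apply/negP => /andP [/andP [_ h1] /andP [_ h2]]; lia.
rewrite addn0; apply: eq_count => x /=; case: (Q x) => //=; lia.
Qed.

Lemma key : exists a : nat, (a + 2 * K <= 6 * K)%N /\
  nth 0 u (a + K - 1) - nth 0 u a <= 2 * tau%:Z /\
  nth 0 u (a + 2 * K - 1) - nth 0 u (a + K) <= 2 * tau%:Z.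
Proof.
set E := E1 ++ E2.
have hEne : E != [::] by rewrite -size_eq0 size_cat hE1 hE2; lia.
have hsu := size_u.
have hsort := sorted_u.
set a := count (fun x => x < w) u.
have ha : (a + 2 * K <= 6 * K)%N.
  have := count_u_split (fun x => x < w + M%:Z) (fun y h1 h2 => ltac:(lia)).
  rewrite (count_all_eq _ (fun x => (x < w + M%:Z) && (w <= x))); last first.
    by move=> x hx; have := hwin _ hx; move=> hh; apply/andP; split; lia.
  rewrite /E size_cat hE1 hE2.
  have -> : count (fun x => (x < w + M%:Z) && (x < w)) u = a.
    by apply: eq_count => x /=; apply/idP/idP; [case/andP | move=> h; apply/andP; split]; lia.
  move=> h; have := count_size (fun x => x < w + M%:Z) u; rewrite hsu h; lia.
exists a; split => //.
have cntK : forall P : pred int,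
    ((forall x, x \in E1 -> P x) \/ (forall x, x \in E2 -> P x)) -> (K <= count P E)%N.
  move=> P [] h; rewrite /E count_cat.
    by rewrite (count_all_eq _ _ h) hE1; lia.
  by rewrite [count P E2](count_all_eq _ _ h) hE2; lia.
have cntK' : forall P : pred int,
    ((forall x, x \in E1 -> ~~ P x) \/ (forall x, x \in E2 -> ~~ P x)) -> (count P E <= K)%N.
  move=> P [] h; rewrite /E count_cat.
    by rewrite (count_none _ _ h); have := count_size P E2; rewrite hE2; lia.
  by rewrite [count P E2](count_none _ _ h); have := count_size P E1; rewrite hE1; lia.
have inE12 : forall x, x \in E -> x \in E1 \/ x \in E2.
  by move=> x; rewrite mem_cat => /orP.
have inE1 : forall x, x \in E1 -> x \in E by move=> x hx; rewrite mem_cat hx.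
have inE2 : forall x, x \in E2 -> x \in E by move=> x hx; rewrite mem_cat hx orbT.
split.
- case: (ex_min _ hEne) => mu hmu hmin.
  have hmuw := hwin _ hmu.
  have h1 : (mu <= nth 0 u a).
    apply: nth_count_ge; rewrite ?hsort //; apply/andP; split; last by rewrite hsu; lia.
    rewrite (count_u_split (fun x => x < mu)); last by move=> y h1 h2; lia.
    rewrite (count_none _ (fun x => (x < mu) && (w <= x))); last first.
      by move=> x /hmin hx; apply/negP => /andP [h _]; lia.
    rewrite addn0; apply: sub_count => x /= /andP [] //.
  have h2 : nth 0 u (a + K - 1) <= mu + 2 * tau%:Z.
    apply: nth_count_le; rewrite ?hsort //.
    have hc : leq (a + K)%N (count (fun x => (x <= mu + 2 * tau%:Z) && (x <= w + M%:Z - 1)) u).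
      rewrite count_u_split; last by move=> y /andP [h h'] _.
      have -> : count (fun x => ((x <= mu + 2 * tau%:Z) && (x <= w + M%:Z - 1)) && (x < w)) u = a.
        apply: eq_count => x /=; apply/idP/idP; [by case/andP | move=> h; apply/andP; split]; try lia.
      rewrite leq_add2l.
      apply: cntK; case: (inE12 _ hmu) => hm; [left|right] => x hx.
        have := hn1 _ _ hx hm; have := hwin _ (inE1 _ hx); move=> ? ?; apply/andP; split; [apply/andP; split|]; lia.
      have := hn2 _ _ hx hm; have := hwin _ (inE2 _ hx); move=> ? ?; apply/andP; split; [apply/andP; split|]; lia.
    have hs : leq (count (fun x => (x <= mu + 2 * tau%:Z) && (x <= w + M%:Z - 1)) u) (count (<= (mu + 2 * tau%:Z)%R)%O u) by apply: sub_count => x /andP [].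
    apply: leq_trans (leq_trans hc hs); lia.
  lia.
- case: (ex_max _ hEne) => nu hnu hmax.
  have hnuw := hwin _ hnu.
  have h3 : nth 0 u (a + 2 * K - 1) <= nu.
    apply: nth_count_le; rewrite ?hsort //.
    have hc : leq (a + 2 * K)%N (count (fun x => x <= nu) u).
      rewrite count_u_split; last by move=> y h h'; lia.
      have -> : count (fun x => (x <= nu) && (x < w)) u = a.
        by apply: eq_count => x /=; apply/idP/idP; [case/andP | move=> h; apply/andP; split]; lia.
      rewrite leq_add2l (count_all_eq _ (fun x => (x <= nu) && (w <= x))).
        by rewrite size_cat hE1 hE2; lia.
      by move=> x hx; have := hwin _ hx; have := hmax _ hx; move=> ? ?; apply/andP; split; lia.
    apply: leq_trans hc; lia.
  have h4 : nu - 2 * tau%:Z <= nth 0 u (a + K).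
    apply: nth_count_ge; rewrite ?hsort //; apply/andP; split; last by rewrite hsu; lia.
    rewrite (count_u_split (fun x => x < nu - 2 * tau%:Z)); last by move=> y h1 h2; lia.
    have ha1 : leq (count (fun x => (x < nu - 2 * tau%:Z) && (x < w)) u) a.
      by apply: sub_count => x /= /andP [].
    have ha2 : leq (count (fun x => (x < nu - 2 * tau%:Z) && (w <= x)) (E1 ++ E2)) K.
      apply: cntK'; case: (inE12 _ hnu) => hm; [left|right] => x hx.
        by have := hn1 _ _ hm hx; move=> ?; apply/negP => /andP [h _]; lia.
      by have := hn2 _ _ hm hx; move=> ?; apply/negP => /andP [h _]; lia.
    exact: leq_add ha1 ha2.
  lia.
Qed.
End Key.

Lemma final (U : nat -> int) (Dk : nat -> int) (K M tau : nat) :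
 (1 <= K)%N -> (8 * tau < M)%N ->
 (forall k, (1 <= k <= 2 * K)%N -> Dk k = U k - U k.-1) ->
 (forall i, (i < 4 * K)%N -> U (i + 2 * K)%N = U i + M%:Z) ->
 (forall i j, (i <= j)%N -> (j < 6 * K)%N -> U i <= U j) ->
 (exists a, (1 <= a <= 2*K)%N /\ U (a + K - 1)%N - U a <= 2 * tau%:Z /\
     U (a + 2*K - 1)%N - U (a + K)%N <= 2 * tau%:Z) ->
 (exists! k0 : nat, [/\ (1 <= k0)%N, (k0 <= K)%N & M%:Z < 2 * (Dk k0 + Dk (k0 + K)%N)]) /\
 (forall k0, (1 <= k0)%N -> (k0 <= K)%N -> M%:Z < 2 * (Dk k0 + Dk (k0 + K)%N) ->
   U (k0 + K - 1)%N - U k0 <= 2 * tau%:Z /\ U (k0 + 2 * K - 1)%N - U (k0 + K)%N <= 2 * tau%:Z).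
Proof.
move=> hK htau hD hper hmono [a [ha [hw1 hw2]]].
have [ks [hks [hk1 hk2]]] : exists ks, (1 <= ks <= K)%N /\
    U (ks + K - 1)%N - U ks <= 2 * tau%:Z /\ U (ks + 2 * K - 1)%N - U (ks + K)%N <= 2 * tau%:Z.
  case: (leqP a K) => haK.
    by exists a; split => //; lia.
  exists (a - K)%N; split; first lia.
  have e1 := hper (a - 1)%N ltac:(lia).
  have e2 := hper (a - K)%N ltac:(lia).
  have -> : (a - K + K - 1 = a - 1)%N by lia.
  have -> : (a - K + 2 * K - 1 = a + K - 1)%N by lia.
  have -> : (a - K + K = a)%N by lia.
  rewrite (_ : (a - 1 + 2 * K = a + 2 * K - 1)%N) in e1; last by lia.
  rewrite (_ : (a - K + 2 * K = a + K)%N) in e2; last by lia.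
  split; lia.
have Eid : forall k, (1 <= k <= K)%N ->
    Dk k + Dk (k + K)%N = M%:Z - (U (k + K - 1)%N - U k) - (U (k + 2 * K - 1)%N - U (k + K)%N).
  move=> k hk.
  rewrite (hD k) ?(hD (k + K)%N); try lia.
  have e := hper k.-1 ltac:(lia).
  rewrite (_ : (k.-1 + 2 * K = k + 2 * K - 1)%N) in e; last by lia.
  have -> : ((k + K).-1 = k + K - 1)%N by lia.
  lia.
have uniq : forall k, (1 <= k <= K)%N -> M%:Z < 2 * (Dk k + Dk (k + K)%N) -> k = ks.
  move=> k hk hlt.
  case: (ltngtP k ks) => // hcmp; exfalso.
  -
    rewrite (hD k) ?(hD (k + K)%N) in hlt; try lia.
    have e := hper k.-1 ltac:(lia).
    have e' := hper k ltac:(lia).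
    rewrite (_ : (k.-1 + 2 * K = k + 2 * K - 1)%N) in e; last by lia.
    rewrite (_ : ((k + K).-1 = k + K - 1)%N) in hlt; last by lia.
    have m1 := hmono (k + K)%N (ks + K - 1)%N ltac:(lia) ltac:(lia).
    have m2 := hmono ks (k + K - 1)%N ltac:(lia) ltac:(lia).
    have m3 := hmono (k + 2 * K)%N (ks + 2 * K - 1)%N ltac:(lia) ltac:(lia).
    have m4 := hmono (ks + K)%N (k + 2 * K - 1)%N ltac:(lia) ltac:(lia).
    lia.
  - rewrite (hD k) ?(hD (k + K)%N) in hlt; try lia.
    rewrite (_ : ((k + K).-1 = k + K - 1)%N) in hlt; last by lia.
    have m1 := hmono k (ks + K - 1)%N ltac:(lia) ltac:(lia).
    have m2 := hmono ks k.-1 ltac:(lia) ltac:(lia).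
    have m3 := hmono (k + K)%N (ks + 2 * K - 1)%N ltac:(lia) ltac:(lia).
    have m4 := hmono (ks + K)%N (k + K - 1)%N ltac:(lia) ltac:(lia).
    lia.
split.
  exists ks; split.
    split; try lia. rewrite Eid; lia.
  by move=> k [h1 h2 h3]; rewrite (uniq k) //; lia.
move=> k0 h1 h2 h3; rewrite (uniq k0) //; lia.
Qed.

Lemma nth_u (S : seq int) (M n i : nat) : size S = n -> (i < n)%N ->
  [/\ nth 0 (u S M) i = nth 0 S i, nth 0 (u S M) (i + n)%N = nth 0 S i + M%:Z &
      nth 0 (u S M) (i + 2 * n)%N = nth 0 S i + 2 * M%:Z].
Proof.
move=> hs hi; rewrite /u; split.
- by rewrite nth_cat hs hi.
- rewrite nth_cat hs ifF; last lia.
  rewrite nth_cat size_map hs ifT; last lia.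
  by rewrite (nth_map 0) ?hs; [rewrite addnK | lia].
- rewrite nth_cat hs ifF; last lia.
  rewrite nth_cat size_map hs ifF; last lia.
  by rewrite (nth_map 0) ?hs; [congr (nth _ _ _ + _); lia | lia].
Qed.

Lemma lifts (M tau c0 c1 : int) : 0 <= tau -> 8 * tau < M -> 0 <= c0 < M -> 0 <= c1 < M ->
 exists w sh0 sh1, [/\ 0 <= w <= 2 * M, (sh0 = M \/ sh0 = 2 * M), (sh1 = M \/ sh1 = 2 * M),
  (forall d, - tau <= d <= tau -> w <= c0 + d + sh0 <= w + M - 1) &
  (forall d, - tau <= d <= tau -> w <= c1 + d + sh1 <= w + M - 1)].
Proof.
move=> ht hM h0 h1.
case: (lerP c0 c1) => hc.
  case: (lerP (c1 - c0 + 2 * tau) (M - 1)) => hh.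
    exists (c0 - tau + M), M, M; split; try lia; move=> d hd; lia.
  exists (c1 - tau + M), (2 * M), M; split; try lia; move=> d hd; lia.
case: (lerP (c0 - c1 + 2 * tau) (M - 1)) => hh.
  exists (c1 - tau + M), M, M; split; try lia; move=> d hd; lia.
exists (c0 - tau + M), M, (2 * M); split; try lia; move=> d hd; lia.
Qed.

Lemma spread_of (O : seq int) (f : nat -> int) (lo hi : nat) (b : int) :
  (forall x, x \in O -> exists j, (lo <= j <= hi)%N /\ x = f j) ->
  (forall i j, (lo <= i)%N -> (i <= j)%N -> (j <= hi)%N -> f i <= f j) ->
  f hi - f lo <= b -> spread_le O b.
Proof.
move=> hO hm hb x y hx hy.
case: (hO x hx) => i [hi' ->]; case: (hO y hy) => j [hj' ->].
have := hm i hi ltac:(lia) ltac:(lia) ltac:(lia).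
have := hm lo j ltac:(lia) ltac:(lia) ltac:(lia).
lia.
Qed.

Theorem lemma2 (K M : nat) (m : 'I_K -> nat) (N : 'I_2 -> nat)
    (Delta : 'I_2 -> 'I_K -> int) :
  (2 <= K)%N ->
  (forall i : 'I_K, 0 < m i)%N ->
  (forall i j : 'I_K, (i < j)%N -> (m i < m j)%N) ->
  (forall i j : 'I_K, i != j -> coprime (m i) (m j)) ->
  (0 < M)%N ->
  (8 * tau Delta < M)%N ->
  (exists! k0 : nat, [/\ (1 <= k0)%N, (k0 <= K)%N &
      M%:Z < 2 * (D M m N Delta k0 + D M m N Delta (k0 + K))]) /\
  (forall k0 : nat, (1 <= k0)%N -> (k0 <= K)%N ->
      M%:Z < 2 * (D M m N Delta k0 + D M m N Delta (k0 + K)) ->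
      spread_le (Omega1 M m N Delta k0) (2 * (tau Delta)%:Z) /\
      spread_le (Omega2 M m N Delta k0) (2 * (tau Delta)%:Z)).
Proof.
move=> hK2 _ _ _ hM htau.
set T := tau Delta.
set S := ssorted M m N Delta.
have habs : forall l k, (`|Delta l k| <= T)%N.
  move=> l k; rewrite /T /tau.
  apply: leq_trans (leq_bigmax l).
  exact: (leq_bigmax (F := fun k => `|Delta l k|%N) k).
have hSsort : sorted <=%O S by apply: sort_sorted; exact: le_total.
have hSperm : perm_eq S (svals M m N Delta) by apply/permPl; apply: perm_sort.
have hsv : svals M m N Delta = map (rtc M m N Delta ord0) (enum 'I_K) ++ map (rtc M m N Delta 1) (enum 'I_K).
  rewrite /svals !enum_ordSl enum_ord0 /= cats0.
  by have -> : lift ord0 (ord0 : 'I_1) = 1 :> 'I_2 by apply/val_inj.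
have hSr : forall x, x \in S -> 0 <= x < M%:Z.
  move=> x; rewrite (perm_mem hSperm) => /allpairsP [[l k] [_ _ ->]] /=.
  rewrite /rtc; lia.
set c := fun l => ((N l %% M)%N)%:Z.
have hc : forall l, 0 <= c l < M%:Z.
  move=> l; rewrite /c; have := ltn_pmod (N l) hM; lia.
have [w [sh0 [sh1 [hw hs0 hs1 hl0 hl1]]]] :=
  lifts (M%:Z) (T%:Z) (c ord0) (c 1) ltac:(lia) ltac:(lia) (hc _) (hc _).
set sh := fun l : 'I_2 => if l == ord0 then sh0 else sh1.
have hsh : forall l, sh l = M%:Z \/ sh l = 2 * M%:Z.
  by move=> l; rewrite /sh; case: ifP.
have hlift : forall l d, - T%:Z <= d <= T%:Z -> w <= c l + d + sh l <= w + M%:Z - 1.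
  move=> l d hd; rewrite /sh; case: ifP => [/eqP ->|/negbT hl]; first exact: hl0.
  have -> : l = 1 by apply/val_inj; case: l hl => [[|[|]] //] /=.
  exact: hl1.
set E := fun l => [seq c l + Delta l k + sh l | k <- enum 'I_K].
have hmod : forall l k, ((c l + Delta l k + sh l) %% M%:Z)%Z = rtc M m N Delta l k.
  move=> l k; rewrite /rtc /rt /c.
  have h1 := modn_dvdm (N l) (dvdn_mulr (m k) (dvdnn M)).
  have hq := divn_eq (N l %% (M * m k)) M.
  rewrite h1 in hq.
  move: hq; set A := (N l %% (M * m k))%N; set q := (A %/ M)%N; move=> hq.
  apply/eqP; rewrite eqz_mod_dvd; apply/dvdzP.
  case: (hsh l) => ->.
    by exists (1 - q%:Z); lia.
  by exists (2 - q%:Z); lia.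
have hperm : perm_eq S (map (fun x => (x %% M%:Z)%Z) (E ord0 ++ E 1)).
  have ee : map (fun x => (x %% M%:Z)%Z) (E ord0 ++ E 1) = svals M m N Delta.
    rewrite hsv map_cat; congr (_ ++ _); rewrite -map_comp; apply: eq_map => k /=; exact: hmod.
  by rewrite ee.
have hEsz : forall l, size (E l) = K by move=> l; rewrite size_map size_enum_ord.
have hwin : forall x, x \in E ord0 ++ E 1 -> w <= x <= w + M%:Z - 1.
  move=> x; rewrite mem_cat => /orP [] /mapP [k _ ->]; apply: hlift.
    by have := habs ord0 k; lia.
  by have := habs 1 k; lia.
have hnar : forall l x y, x \in E l -> y \in E l -> x - y <= 2 * T%:Z.
  by move=> l x y /mapP [k _ ->] /mapP [k' _ ->]; have := habs l k; have := habs l k'; lia.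
have hK : (0 < K)%N by lia.
have [a [ha [hw1 hw2]]] := key S (E ord0) (E 1) K M T w hK hM hSsort hSr (hEsz _) (hEsz _) hperm hw hwin (hnar ord0) (hnar 1).
pose U i := nth 0 (u S M) i.
have hw1' : U (a + K - 1)%N - U a <= 2 * T%:Z := hw1.
have hw2' : U (a + 2 * K - 1)%N - U (a + K)%N <= 2 * T%:Z := hw2.
have hsS : size S = (2 * K)%N.
  rewrite (perm_size hSperm) hsv size_cat !size_map -enumT size_enum_ord; lia.
have hper : forall i, (i < 4 * K)%N -> U (i + 2 * K)%N = U i + M%:Z.
  move=> i hi; rewrite /U; case: (ltnP i (2 * K)) => hi2.
    by have [-> -> _] := nth_u S M (2 * K) i hsS hi2.
  have hi' : (i - 2 * K < 2 * K)%N by lia.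
  have [_ e1 e2] := nth_u S M (2 * K) (i - 2 * K) hsS hi'.
  rewrite (_ : (i - 2 * K + 2 * K = i)%N) in e1; last lia.
  rewrite (_ : (i - 2 * K + 2 * (2 * K) = i + 2 * K)%N) in e2; last lia.
  rewrite e1 e2; lia.
have hper' : forall i j, (i < 4 * K)%N -> j = (i + 2 * K)%N -> U j = U i + M%:Z.
  by move=> i j hi ->; exact: hper.
have hsu : size (u S M) = (6 * K)%N by rewrite /u !size_cat !size_map hsS; lia.
have hsrt := sorted_u S (E ord0) (E 1) K M w hK hM hSsort hSr (hEsz ord0) (hEsz 1) hperm hw.
have hmono : forall i j, (i <= j)%N -> (j < 6 * K)%N -> U i <= U j.
  move=> i j hij hj; rewrite /U; apply: le_sorted_leq_nth => //; rewrite inE hsu; lia.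
have hsU : forall i, (1 <= i <= 2 * K)%N -> s M m N Delta i = U i.-1.
  move=> i hi; rewrite /s -/S; have [e _ _] := nth_u S M (2 * K) i.-1 hsS ltac:(lia).
  by rewrite /U e.
have hD : forall k, (1 <= k <= 2 * K)%N -> D M m N Delta k = U k - U k.-1.
  move=> k hk; rewrite /D; case: eqP => [hk2|hk2].
    rewrite !hsU; try lia.
    rewrite hk2 (hper' 0%N (2 * K)%N) //=; lia.
  rewrite !hsU //; lia.
have hex : exists a, (1 <= a <= 2*K)%N /\ U (a + K - 1)%N - U a <= 2 * T%:Z /\
     U (a + 2*K - 1)%N - U (a + K)%N <= 2 * T%:Z.
  case: (posnP a) => [a0|apos].
    exists (2 * K)%N; split; first lia.
    rewrite a0 !add0n in hw1' hw2'.
    have e1 := hper' (K - 1)%N (2 * K + K - 1)%N ltac:(lia) ltac:(lia).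
    have e2 := hper' 0%N (2 * K)%N ltac:(lia) ltac:(lia).
    have e3 := hper' (2 * K - 1)%N (2 * K + 2 * K - 1)%N ltac:(lia) ltac:(lia).
    have e4 := hper' K (2 * K + K)%N ltac:(lia) ltac:(lia).
    split; lia.
  case: (leqP a (2 * K)) => ha2.
    by exists a; split => //; lia.
  exists (a - 2 * K)%N; split; first lia.
  have e1 := hper' (a - 2 * K + K - 1)%N (a + K - 1)%N ltac:(lia) ltac:(lia).
  have e2 := hper' (a - 2 * K)%N a ltac:(lia) ltac:(lia).
  have e3 := hper' (a - 2 * K + 2 * K - 1)%N (a + 2 * K - 1)%N ltac:(lia) ltac:(lia).
  have e4 := hper' (a - 2 * K + K)%N (a + K)%N ltac:(lia) ltac:(lia).
  split; lia.
have [A B] := final U (D M m N Delta) K M T ltac:(lia) htau hD hper hmono hex.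
split; first exact: A.
move=> k0 h1 h2 h3; have [w1 w2] := B k0 h1 h2 h3; split.
  apply: (spread_of _ U k0 (k0 + K - 1)%N _ _ _ w1).
    move=> x /mapP [i hi ->]; rewrite mem_iota in hi; exists i.-1; split; first lia.
    by rewrite hsU //; lia.
  by move=> i j _ hij hj; apply: hmono; lia.
have w2' : (U (k0 + 2 * K - 1)%N - M%:Z) - (U (k0 + K)%N - M%:Z) <= 2 * T%:Z by lia.
apply: (spread_of _ (fun j => U j - M%:Z) (k0 + K)%N (k0 + 2 * K - 1)%N _ _ _ w2'); last first.
  by move=> i j _ hij hj; have := hmono i j hij ltac:(lia); lia.
rewrite /Omega2; case: eqP => [hk0|hk0] x.
  move=> /mapP [i hi ->]; rewrite mem_iota in hi; exists (i.-1 + 2 * K)%N; split; first lia.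
  rewrite hsU ?(hper' i.-1 (i.-1 + 2 * K)%N) //; lia.
rewrite mem_cat => /orP [] /mapP [i hi ->]; rewrite mem_iota in hi.
  by exists i.-1; split; [lia | rewrite hsU //; lia].
exists (i.-1 + 2 * K)%N; split; first lia.
rewrite hsU ?(hper' i.-1 (i.-1 + 2 * K)%N) //; lia.
Qed.
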